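(* The $\mathbb{Z}_2$-lattice $\mathbb{H}^3\perp\langle 1,-1\rangle$ primitively represents every $\mathbb{Z}_2$-lattice of rank $4$ that is not isometric to $\mathbb{A}\perp 2\mathbb{A}$.
   Context: A $\mathbb{Z}_2$-lattice is a finitely generated $\mathbb{Z}_2$-submodule of a quadratic space over $\mathbb{Q}_2$, assumed integral ($B(L,L)\subseteq\mathbb{Z}_2$) and nondegenerate. A representation is a $\mathbb{Z}_2$-linear map preserving $B$, primitive if its image is a direct summand. $\mathbb{H}$ has Gram matrix $\begin{pmatrix}0&1\\1&0\end{pmatrix}$, $\mathbb{H}^3=\mathbb{H}\perp\mathbb{H}\perp\mathbb{H}$, $\langle 1,-1\rangle$ has Gram matrix $\operatorname{diag}(1,-1)$, $\mathbb{A}$ has Gram matrix $\begin{pmatrix}2&1\\1&2\end{pmatrix}$, and $2\mathbb{A}$ has Gram matrix $\begin{pmatrix}4&2\\2&4\end{pmatrix}$. *)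

(* Defs.v *)
From HB Require Import structures.
From mathcomp Require Import all_boot all_order all_algebra.
Set Implicit Arguments. Unset Strict Implicit. Unset Printing Implicit Defensive.
Import Order.TTheory GRing.Theory Num.Theory.
Local Open Scope ring_scope.

(* The ring of 2-adic integers, characterised up to (unique) isomorphism:   *)
(* an integral domain R in which 2 is a nonzero non-unit, every nonzero      *)
(* element is 2^k * unit (so R is a DVR with uniformizer 2), the residue     *)
(* ring R/2R is {0,1} (= F_2), and R is 2-adically complete.                *)
(* Any such R is isomorphic to Z_2.                                          *)
Definition dvd2k (R : idomainType) (k : nat) (x : R) : Prop :=
  exists y : R, x = 2 ^+ k * y.

Definition is_Z2 (R : idomainType) : Prop :=
  [/\ (2 : R) != 0,
      (2 : R) \isn't a GRing.unit,
      forall x : R, x != 0 ->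
        exists (k : nat) (u : R), u \is a GRing.unit /\ x = 2 ^+ k * u,
      forall x : R, dvd2k 1 x \/ dvd2k 1 (x - 1)
    & forall a : nat -> R, (forall n, dvd2k n (a n.+1 - a n)) ->
        exists l : R, forall n, dvd2k n (l - a n)].

(* Lattices are given by Gram matrices in a Z_2-basis (column convention:  *)
(* B(v, w) = v^T G w).                                                      *)

(* A representation of the lattice with Gram G (rank n) by the lattice with *)
(* Gram M (rank m): a Z_2-linear map X : R^n -> R^m with X^T M X = G.       *)
(* It is primitive iff its image is a direct summand; since X is injective  *)
(* (G nondegenerate), this means X has a linear left inverse (retraction).  *)
Definition represents (R : idomainType) (m n : nat)
    (M : 'M[R]_m) (G : 'M[R]_n) : Prop :=
  exists X : 'M[R]_(m, n), X^T *m M *m X = G.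

Definition prim_represents (R : idomainType) (m n : nat)
    (M : 'M[R]_m) (G : 'M[R]_n) : Prop :=
  exists X : 'M[R]_(m, n),
    X^T *m M *m X = G /\ exists Y : 'M[R]_(n, m), Y *m X = 1%:M.

Definition isometric (R : idomainType) (n : nat) (G1 G2 : 'M[R]_n) : Prop :=
  exists U : 'M[R]_n, U \in unitmx /\ U^T *m G1 *m U = G2.

Definition mxHyp (R : idomainType) : 'M[R]_2 :=
  \matrix_(i, j) (if i == j then 0 else 1).
Definition mx1m1 (R : idomainType) : 'M[R]_2 :=
  \matrix_(i, j) (if i == j then (if i == 0 :> nat then 1 else -1) else 0).
Definition mxA (R : idomainType) : 'M[R]_2 :=
  \matrix_(i, j) (if i == j then 2 else 1).

Definition mxH3_1m1 (R : idomainType) : 'M[R]_8 :=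
  block_mx (mxHyp R) 0 0
    (block_mx (mxHyp R) 0 0 (block_mx (mxHyp R) 0 0 (mx1m1 R))).

Definition mxA_2A (R : idomainType) : 'M[R]_4 :=
  block_mx (mxA R) 0 0 (2 *: mxA R).

(* Main.v *)
Require Import Defs.
From HB Require Import structures.
From mathcomp Require Import all_boot all_order all_algebra.
From mathcomp Require Import ring.
From Stdlib Require Import ClassicalEpsilon.
Import Order.TTheory GRing.Theory Num.Theory.
Set Implicit Arguments. Unset Strict Implicit. Unset Printing Implicit Defensive.
Local Open Scope ring_scope.

Section Parity.
Variable R : idomainType.
Hypothesis HR : is_Z2 R.

Definition ev (x : R) := exists y, x = 2 * y.

Lemma two_nonunit : (2 : R) \isn't a GRing.unit.
Proof. by case: HR. Qed.

Lemma two_neq0 : (2 : R) != 0.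
Proof. by case: HR. Qed.

Lemma ev_or_odd x : ev x \/ ev (x - 1).
Proof.
case: HR => _ _ _ H _; case: (H x) => [[y Hy]|[y Hy]]; [left|right]; exists y; by rewrite Hy expr1.
Qed.

Lemma not_ev1 : ~ ev 1.
Proof.
case=> y Hy; move/negP: two_nonunit; apply; apply/unitrP; exists y; split.
  by rewrite mulrC; apply: esym.
exact: esym.
Qed.

Lemma ev_odd_false x : ev x -> ev (x - 1) -> False.
Proof. move=> [y Hy] [z Hz]; apply: not_ev1; exists (y - z); rewrite mulrBr -Hy -Hz; ring. Qed.

Lemma ev0 : ev 0. Proof. by exists 0; rewrite mulr0. Qed.
Lemma ev2 y : ev (2 * y). Proof. by exists y. Qed.
Lemma evD x y : ev x -> ev y -> ev (x + y).
Proof. by move=> [a ->] [b ->]; exists (a + b); ring. Qed.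
Lemma evN x : ev x -> ev (- x).
Proof. by move=> [a ->]; exists (- a); ring. Qed.
Lemma evB x y : ev x -> ev y -> ev (x - y).
Proof. by move=> hx hy; apply: evD => //; apply: evN. Qed.
Lemma evMl x y : ev x -> ev (x * y).
Proof. by move=> [a ->]; exists (a * y); ring. Qed.
Lemma evMr x y : ev y -> ev (x * y).
Proof. by move=> [a ->]; exists (x * a); ring. Qed.
Lemma ev_eq x y : x = y -> ev x -> ev y. Proof. by move=> ->. Qed.

Lemma odd_unit x : ev (x - 1) -> x \is a GRing.unit.
Proof.
move=> hx; have x0 : x != 0.
  apply/negP => /eqP x0; apply: not_ev1; rewrite x0 sub0r in hx.
  by rewrite -[1 : R]opprK; apply: evN.
case: HR => _ _ H _ _; case: (H x x0) => [[|k] [u [hu hxe]]].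
  by rewrite hxe expr0 mul1r.
exfalso; apply: (@ev_odd_false x _ hx); exists (2 ^+ k * u); by rewrite hxe exprS mulrA.
Qed.

Lemma unit_odd x : x \is a GRing.unit -> ev (x - 1).
Proof.
move=> hx; case: (ev_or_odd x) => // [[y Hy]]; exfalso.
move/negP: two_nonunit; apply; rewrite Hy unitrM in hx; by case/andP: hx.
Qed.

Lemma odd_inv x : ev (x - 1) -> exists xi, x * xi = 1 /\ ev (xi - 1).
Proof.
move=> hx; have hu := odd_unit hx; exists x^-1; split; first by rewrite mulrV.
by apply: unit_odd; rewrite unitrV.
Qed.

Lemma oddMul x y : ev (x - 1) -> ev (y - 1) -> ev (x * y - 1).
Proof.
move=> [a ha] [b hb]; exists (a + b + 2 * a * b).
have -> : x = 1 + 2 * a by rewrite -ha; ring.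
have -> : y = 1 + 2 * b by rewrite -hb; ring.
ring.
Qed.

Lemma sq_x_x x : ev (x + x ^+ 2).
Proof.
case: (ev_or_odd x) => [[y ->]|[y hy]].
  by exists (y + 2 * y ^+ 2); ring.
have -> : x = 1 + 2 * y by rewrite -hy; ring.
by exists (1 + 3 * y + 2 * y ^+ 2); ring.
Qed.

Lemma dvd2kD n (x y : R) : dvd2k n x -> dvd2k n y -> dvd2k n (x + y).
Proof. by move=> [a ->] [b ->]; exists (a + b); ring. Qed.
Lemma dvd2kMl n (x y : R) : dvd2k n x -> dvd2k n (x * y).
Proof. by move=> [a ->]; exists (a * y); ring. Qed.
Lemma dvd2kW n m (x : R) : (n <= m)%N -> dvd2k m x -> dvd2k n x.
Proof.
move=> le [a ->]; exists (2 ^+ (m - n) * a); by rewrite mulrA -exprD subnKC.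
Qed.

Lemma dvd2k_all0 (x : R) : (forall n, dvd2k n x) -> x = 0.
Proof.
move=> H; apply/eqP; apply/negPn/negP => x0.
case: HR => _ _ H3 _ _; case: (H3 x x0) => k [u [hu hx]].
case: (H k.+1) => y; rewrite hx exprS (mulrC 2) -mulrA => /(mulfI _) hy.
have : 2 ^+ k != 0 :> R by rewrite expf_neq0 // two_neq0.
move=> /hy {}hy; move: hu; rewrite hy unitrM => /andP [h _].
by move/negP: two_nonunit.
Qed.

Lemma hensel (k : R) : ev k -> exists m : R, m ^+ 2 + m = k.
Proof.
move=> hk.
have step : forall (n : nat) (m : R), exists m', dvd2k n.+1 (m ^+ 2 + m - k) ->
   dvd2k n.+1 (m' - m) /\ dvd2k n.+2 (m' ^+ 2 + m' - k).
  move=> n m; case: (classic (dvd2k n.+1 (m ^+ 2 + m - k))); last first.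
    by move=> h; exists m => /h.
  move=> [q hq]; case: (ev_or_odd q) => [[q' hq']|[q' hq']].
    exists m => _; split; first by exists 0; rewrite subrr mulr0.
    exists q'; rewrite hq hq' [2 ^+ n.+2]exprS; ring.
  exists (m + 2 ^+ n.+1) => _; split; first by exists 1; rewrite mulr1; ring.
  have eq : q = 1 + 2 * q' by rewrite -hq'; ring.
  exists (q' + 1 + m + 2 ^+ n).
  have -> : (m + 2 ^+ n.+1) ^+ 2 + (m + 2 ^+ n.+1) - k = (m ^+ 2 + m - k) + 2 ^+ n.+1 * (2 * m + 1 + 2 ^+ n.+1) by ring.
  rewrite hq eq !exprS; ring.
have [f hf] : exists f : nat -> R -> R, forall n m, dvd2k n.+1 (m ^+ 2 + m - k) ->
   dvd2k n.+1 (f n m - m) /\ dvd2k n.+2 (f n m ^+ 2 + f n m - k).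
  exists (fun n m => proj1_sig (constructive_indefinite_description _ (step n m))).
  move=> n m; exact: (proj2_sig (constructive_indefinite_description _ (step n m))).
pose a := fix a n := if n is n'.+1 then f n' (a n') else 0.
have ha : forall n, dvd2k n.+1 (a n ^+ 2 + a n - k).
  elim=> [|n IH] /=.
    by case: hk => y ->; exists (- y); rewrite expr1; ring.
  by case: (hf n (a n) IH).
have hc : forall n, dvd2k n (a n.+1 - a n).
  move=> n; apply: (@dvd2kW n n.+1) => //; by case: (hf n (a n) (ha n)).
case: HR => _ _ _ _ Hc; case: (Hc a hc) => l hl.
exists l; apply/eqP; rewrite -subr_eq0; apply/eqP; apply: dvd2k_all0 => n.
have -> : l ^+ 2 + l - k = (l - a n) * (l + a n + 1) + (a n ^+ 2 + a n - k) by ring.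
apply: dvd2kD; first by apply: dvd2kMl.
exact: (dvd2kW (leqnSn n) (ha n)).
Qed.

Definition mxl m n (l : seq (seq R)) : 'M[R]_(m,n) := \matrix_(i,j) nth 0 (nth [::] l i) j.
Definition mx2 (x y z w : R) : 'M[R]_2 := mxl 2 2 [:: [:: x; y]; [:: z; w]].

Ltac ordc := let H := fresh in case => [[|[|[|[|[|[|[|[|?]]]]]]]] H] //=.
Ltac mxexp := repeat (progress (rewrite ?mxE ?big_ord_recl ?big_ord0 /=)).
Ltac mxsolve := apply/matrixP; ordc; ordc; mxexp; ring.

Definition m4 (a00 a01 a02 a03 a10 a11 a12 a13 a20 a21 a22 a23 a30 a31 a32 a33 : R) : 'M[R]_4 :=
  mxl 4 4 [:: [:: a00; a01; a02; a03]; [:: a10; a11; a12; a13]; [:: a20; a21; a22; a23]; [:: a30; a31; a32; a33]].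

Lemma m4_mul (a00 a01 a02 a03 a10 a11 a12 a13 a20 a21 a22 a23 a30 a31 a32 a33 b00 b01 b02 b03 b10 b11 b12 b13 b20 b21 b22 b23 b30 b31 b32 b33 : R) :
  (m4 (a00) (a01) (a02) (a03) (a10) (a11) (a12) (a13) (a20) (a21) (a22) (a23) (a30) (a31) (a32) (a33)) *m (m4 (b00) (b01) (b02) (b03) (b10) (b11) (b12) (b13) (b20) (b21) (b22) (b23) (b30) (b31) (b32) (b33)) = (m4 (a00 * b00 + a01 * b10 + a02 * b20 + a03 * b30) (a00 * b01 + a01 * b11 + a02 * b21 + a03 * b31) (a00 * b02 + a01 * b12 + a02 * b22 + a03 * b32) (a00 * b03 + a01 * b13 + a02 * b23 + a03 * b33) (a10 * b00 + a11 * b10 + a12 * b20 + a13 * b30) (a10 * b01 + a11 * b11 + a12 * b21 + a13 * b31) (a10 * b02 + a11 * b12 + a12 * b22 + a13 * b32) (a10 * b03 + a11 * b13 + a12 * b23 + a13 * b33) (a20 * b00 + a21 * b10 + a22 * b20 + a23 * b30) (a20 * b01 + a21 * b11 + a22 * b21 + a23 * b31) (a20 * b02 + a21 * b12 + a22 * b22 + a23 * b32) (a20 * b03 + a21 * b13 + a22 * b23 + a23 * b33) (a30 * b00 + a31 * b10 + a32 * b20 + a33 * b30) (a30 * b01 + a31 * b11 + a32 * b21 + a33 * b31) (a30 * b02 + a31 * b12 + a32 * b22 + a33 * b32) (a30 * b03 + a31 * b13 + a32 * b23 + a33 * b33)).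
Proof. by mxsolve. Qed.

Lemma m4_tr (a00 a01 a02 a03 a10 a11 a12 a13 a20 a21 a22 a23 a30 a31 a32 a33 : R) :
  (m4 (a00) (a01) (a02) (a03) (a10) (a11) (a12) (a13) (a20) (a21) (a22) (a23) (a30) (a31) (a32) (a33))^T = (m4 (a00) (a10) (a20) (a30) (a01) (a11) (a21) (a31) (a02) (a12) (a22) (a32) (a03) (a13) (a23) (a33)).
Proof. apply/matrixP; ordc; ordc; by rewrite !mxE /=. Qed.

Lemma m4_add (a00 a01 a02 a03 a10 a11 a12 a13 a20 a21 a22 a23 a30 a31 a32 a33 b00 b01 b02 b03 b10 b11 b12 b13 b20 b21 b22 b23 b30 b31 b32 b33 : R) :
  (m4 (a00) (a01) (a02) (a03) (a10) (a11) (a12) (a13) (a20) (a21) (a22) (a23) (a30) (a31) (a32) (a33)) + (m4 (b00) (b01) (b02) (b03) (b10) (b11) (b12) (b13) (b20) (b21) (b22) (b23) (b30) (b31) (b32) (b33)) = (m4 (a00 + b00) (a01 + b01) (a02 + b02) (a03 + b03) (a10 + b10) (a11 + b11) (a12 + b12) (a13 + b13) (a20 + b20) (a21 + b21) (a22 + b22) (a23 + b23) (a30 + b30) (a31 + b31) (a32 + b32) (a33 + b33)).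
Proof. apply/matrixP; ordc; ordc; by rewrite !mxE /=. Qed.

Definition m24 (p0 p1 p2 p3 q0 q1 q2 q3 : R) : 'M[R]_(2,4) := mxl 2 4 [:: [:: p0; p1; p2; p3]; [:: q0; q1; q2; q3]].

Definition m42 (y00 y01 y10 y11 y20 y21 y30 y31 : R) : 'M[R]_(4,2) := mxl 4 2 [:: [:: y00; y01]; [:: y10; y11]; [:: y20; y21]; [:: y30; y31]].

Lemma formH (p0 p1 p2 p3 q0 q1 q2 q3 : R) :
  (m24 p0 p1 p2 p3 q0 q1 q2 q3)^T *m mx2 0 1 1 0 *m (m24 p0 p1 p2 p3 q0 q1 q2 q3) = (m4 (p0 * q0 + q0 * p0) (p0 * q1 + q0 * p1) (p0 * q2 + q0 * p2) (p0 * q3 + q0 * p3) (p1 * q0 + q1 * p0) (p1 * q1 + q1 * p1) (p1 * q2 + q1 * p2) (p1 * q3 + q1 * p3) (p2 * q0 + q2 * p0) (p2 * q1 + q2 * p1) (p2 * q2 + q2 * p2) (p2 * q3 + q2 * p3) (p3 * q0 + q3 * p0) (p3 * q1 + q3 * p1) (p3 * q2 + q3 * p2) (p3 * q3 + q3 * p3)).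
Proof. by mxsolve. Qed.

Lemma formJ (p0 p1 p2 p3 q0 q1 q2 q3 : R) :
  (m24 p0 p1 p2 p3 q0 q1 q2 q3)^T *m mx2 1 0 0 (-1) *m (m24 p0 p1 p2 p3 q0 q1 q2 q3) = (m4 (p0 * p0 - q0 * q0) (p0 * p1 - q0 * q1) (p0 * p2 - q0 * q2) (p0 * p3 - q0 * q3) (p1 * p0 - q1 * q0) (p1 * p1 - q1 * q1) (p1 * p2 - q1 * q2) (p1 * p3 - q1 * q3) (p2 * p0 - q2 * q0) (p2 * p1 - q2 * q1) (p2 * p2 - q2 * q2) (p2 * p3 - q2 * q3) (p3 * p0 - q3 * q0) (p3 * p1 - q3 * q1) (p3 * p2 - q3 * q2) (p3 * p3 - q3 * q3)).
Proof. by mxsolve. Qed.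

Lemma m42_mul (y00 y01 y10 y11 y20 y21 y30 y31 p0 p1 p2 p3 q0 q1 q2 q3 : R) :
  (m42 y00 y01 y10 y11 y20 y21 y30 y31) *m (m24 p0 p1 p2 p3 q0 q1 q2 q3) = (m4 (y00 * p0 + y01 * q0) (y00 * p1 + y01 * q1) (y00 * p2 + y01 * q2) (y00 * p3 + y01 * q3) (y10 * p0 + y11 * q0) (y10 * p1 + y11 * q1) (y10 * p2 + y11 * q2) (y10 * p3 + y11 * q3) (y20 * p0 + y21 * q0) (y20 * p1 + y21 * q1) (y20 * p2 + y21 * q2) (y20 * p3 + y21 * q3) (y30 * p0 + y31 * q0) (y30 * p1 + y31 * q1) (y30 * p2 + y31 * q2) (y30 * p3 + y31 * q3)).
Proof. by mxsolve. Qed.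

Lemma m4_1 : 1%:M = (m4 (1) (0) (0) (0) (0) (1) (0) (0) (0) (0) (1) (0) (0) (0) (0) (1)).
Proof. apply/matrixP; ordc; ordc; by rewrite !mxE /=. Qed.

Definition sym4 (a b c d e f g h i j : R) : 'M[R]_4 := m4 a b c d b e f g c f h i d g i j.

Lemma iso_trans n (G1 G2 G3 : 'M[R]_n) : isometric G1 G2 -> isometric G2 G3 -> isometric G1 G3.
Proof.
move=> [U [hU e1]] [V [hV e2]]; exists (U *m V); split; first by rewrite unitmx_mul hU hV.
by rewrite trmx_mul -e2 -e1 !mulmxA.
Qed.

Lemma iso_by n (G G' U V : 'M[R]_n) : U *m V = 1%:M -> U^T *m G *m U = G' -> isometric G G'.
Proof. by move=> /mulmx1_unit [hU _] e; exists U. Qed.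

Lemma iso_eq n (G G' : 'M[R]_n) : G = G' -> isometric G G'.
Proof. move=> ->; exists 1%:M; split; [exact: unitmx1 | by rewrite trmx1 mul1mx mulmx1]. Qed.

Lemma prim_transport m n (M : 'M[R]_m) (G G' : 'M[R]_n) :
  isometric G G' -> prim_represents M G' -> prim_represents M G.
Proof.
move=> [U [hU e]] [X [eX [Y eY]]].
have [V hUV] : exists V : 'M[R]_n, U *m V = 1%:M by exists (invmx U); rewrite mulmxV.
exists (X *m V); split.
  rewrite (_ : _ *m _ *m _ = V^T *m (X^T *m M *m X) *m V); last first.
    by rewrite trmx_mul !mulmxA.
  rewrite eX -e (_ : _ *m _ *m _ = (U *m V)^T *m G *m (U *m V)); last first.
    by rewrite trmx_mul !mulmxA.
  by rewrite hUV trmx1 mul1mx mulmx1.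
exists (U *m Y); by rewrite mulmxA -(mulmxA U) eY mulmx1.
Qed.

Lemma mxA_mx2 : mxA R = mx2 2 1 1 2.
Proof. apply/matrixP; ordc; ordc; by rewrite !mxE /=. Qed.

Lemma scale2 (x y z y' z' u u' : R) : u * u' = 1 -> y * u' = y' -> z * u' ^+ 2 = z' ->
  isometric (mx2 x y y z) (mx2 x y' y' z').
Proof.
move=> hu <- <-; apply: (@iso_by _ _ _ (mx2 1 0 0 u') (mx2 1 0 0 u)).
  rewrite (_ : mx2 1 0 0 u' *m mx2 1 0 0 u = mx2 1 0 0 (u * u')); last by mxsolve.
  by rewrite hu; apply/matrixP; ordc; ordc; rewrite !mxE.
by mxsolve.
Qed.

Lemma shear1 (x y z x' y' t : R) : x + 2 * t * y + t ^+ 2 * z = x' -> y + t * z = y' ->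
  isometric (mx2 x y y z) (mx2 x' y' y' z).
Proof.
move=> <- <-; apply: (@iso_by _ _ _ (mx2 1 0 t 1) (mx2 1 0 (-t) 1)); by mxsolve.
Qed.

Lemma shear2 (x y z y' z' t : R) : y + t * x = y' -> z + 2 * t * y + t ^+ 2 * x = z' ->
  isometric (mx2 x y y z) (mx2 x y' y' z').
Proof.
move=> <- <-; apply: (@iso_by _ _ _ (mx2 1 t 0 1) (mx2 1 (-t) 0 1)); by mxsolve.
Qed.

Lemma Bin (a b c : R) : ev (a - 1) -> ev (b - 1) -> ev (c - 1) ->
  isometric (mx2 (2 * a) b b (2 * c)) (mxA R).
Proof.
move=> ha hb hc; rewrite mxA_mx2.
have [bi [hbi obi]] := odd_inv hb.
pose c1 := c * bi ^+ 2.
have oc1 : ev (c1 - 1) by apply: oddMul => //; rewrite expr2; apply: oddMul.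
have s1 : isometric (mx2 (2 * a) b b (2 * c)) (mx2 (2 * a) 1 1 (2 * c1)).
  apply: (@scale2 (2 * a) b (2 * c) 1 (2 * c1) b bi hbi hbi); rewrite /c1; ring.
apply: (iso_trans s1).
have [c1i [hc1i _]] := odd_inv oc1.
pose k1 := - (c1 * (a - 1)).
have [m hm] : exists m, m ^+ 2 + m = k1 by apply: hensel; apply: evN; apply: evMr.
pose y := m * c1i.
pose z0 := 1 + y * (2 * c1).
have s2 : isometric (mx2 (2 * a) 1 1 (2 * c1)) (mx2 2 z0 z0 (2 * c1)).
  apply: (@shear1 (2 * a) 1 (2 * c1) 2 z0 y) => //.
  have -> : 2 * a + 2 * y * 1 + y ^+ 2 * (2 * c1) = 2 * (a - 1) + 2 * c1i * (m + m ^+ 2 * (c1 * c1i)) + 2.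
    by rewrite /y; ring.
  rewrite hc1i mulr1 (addrC m) hm /k1.
  have -> : 2 * c1i * - (c1 * (a - 1)) = - (2 * (a - 1)) * (c1 * c1i) by ring.
  rewrite hc1i; ring.
apply: (iso_trans s2).
have oz0 : ev (z0 - 1) by exists (y * c1); rewrite /z0; ring.
have [zi [hzi ozi]] := odd_inv oz0.
pose c2 := c1 * zi ^+ 2.
have oc2 : ev (c2 - 1) by apply: oddMul => //; rewrite expr2; apply: oddMul.
have s3 : isometric (mx2 2 z0 z0 (2 * c1)) (mx2 2 1 1 (2 * c2)).
  apply: (@scale2 2 z0 (2 * c1) 1 (2 * c2) z0 zi hzi hzi); rewrite /c2; ring.
apply: (iso_trans s3).
have ow : ev ((1 - 4 * c2) - 1) by exists (- (2 * c2)); ring.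
have [wi [hwi _]] := odd_inv ow.
pose k2 := (c2 - 1) * wi.
have [m2 hm2] : exists m, m ^+ 2 + m = k2.
  apply: hensel; apply: evMl; case: (ev_or_odd c2) => [h|//].
  by exfalso; apply: (ev_odd_false h oc2).
pose t := - m2.
pose al := 1 - 2 * t.
have oal : ev (al - 1) by exists (- t); rewrite /al; ring.
have [ali [hali _]] := odd_inv oal.
have hali' : ali * al = 1 by rewrite mulrC.
have e0 : 1 * al = al by rewrite mul1r.
have s4 : isometric (mx2 2 1 1 (2 * c2)) (mx2 2 al al (2 * c2 * al ^+ 2)).
  apply: (@scale2 2 1 (2 * c2) al (2 * c2 * al ^+ 2) ali al hali' e0) => //.
apply: (iso_trans s4).
apply: (@shear2 2 al (2 * c2 * al ^+ 2) 1 2 t).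
  by rewrite /al; ring.
have -> : 2 * c2 * al ^+ 2 + 2 * t * al + t ^+ 2 * 2 =
     2 * ((4 * c2 - 1) * (t ^+ 2 - t - k2) + (c2 - 1) * (1 - (1 - 4 * c2) * wi)) + 2.
  by rewrite /al /k2; ring.
rewrite hwi (_ : t ^+ 2 - t - k2 = 0); first by ring.
by rewrite /t -hm2; ring.
Qed.


Lemma blk2 p q k (X : 'M[R]_(p, k)) (Y : 'M[R]_(q, k)) A B :
  (col_mx X Y)^T *m block_mx A 0 0 B *m col_mx X Y = X^T *m A *m X + Y^T *m B *m Y.
Proof.
by rewrite tr_col_mx mul_row_block !mulmx0 addr0 add0r mul_row_col.
Qed.

Lemma mxHyp2 : mxHyp R = mx2 0 1 1 0.
Proof. apply/matrixP; ordc; ordc; by rewrite !mxE /=. Qed.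
Lemma mx1m12 : mx1m1 R = mx2 1 0 0 (-1).
Proof. apply/matrixP; ordc; ordc; by rewrite !mxE /=. Qed.

Lemma prim8 (X1 X2 X3 X4 : 'M[R]_(2, 4)) (Y1 Y2 Y3 Y4 : 'M[R]_(4, 2)) (G : 'M[R]_4) :
  X1^T *m mx2 0 1 1 0 *m X1 + X2^T *m mx2 0 1 1 0 *m X2 + X3^T *m mx2 0 1 1 0 *m X3
    + X4^T *m mx2 1 0 0 (-1) *m X4 = G ->
  Y1 *m X1 + Y2 *m X2 + Y3 *m X3 + Y4 *m X4 = 1%:M ->
  prim_represents (mxH3_1m1 R) G.
Proof.
move=> eG eY; exists (col_mx X1 (col_mx X2 (col_mx X3 X4))); split.
  rewrite /mxH3_1m1. refine (etrans (@blk2 2 (2 + (2 + 2)) 4 X1 _ _ _) _).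
  by rewrite !blk2 mxHyp2 mx1m12 -eG !addrA.
exists (row_mx Y1 (row_mx Y2 (row_mx Y3 Y4))).
refine (etrans (@mul_row_col _ 4 2 (2 + (2 + 2)) 4 Y1 _ X1 _) _).
by rewrite !mul_row_col -eY !addrA.
Qed.

Lemma id4 (x : R) : x = 1 ->
  mxl 4 4 [:: [:: 1; 0; 0; 0]; [:: 0; 1; 0; 0]; [:: 0; 0; 1; 0]; [:: 0; 0; 0; x]] = 1%:M.
Proof. move=> ->; apply/matrixP; ordc; ordc; by rewrite !mxE /=. Qed.

End Parity.

Local Open Scope nat_scope.
Definition qn (k0 k1 k2 k3 l01 l02 l03 l12 l13 l23 : nat) (x0 x1 x2 x3 : bool) : nat :=
  x0 * k0 + x1 * k1 + x2 * k2 + x3 * k3 + 2 * (x0 * x1 * l01 + x0 * x2 * l02 + x0 * x3 * l03 + x1 * x2 * l12 + x1 * x3 * l13 + x2 * x3 * l23).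
Definition bvecs : seq (bool * bool * bool * bool) :=
  [:: (true, true, true, true); (true, true, true, false); (true, true, false, true); (true, true, false, false); (true, false, true, true); (true, false, true, false); (true, false, false, true); (true, false, false, false); (false, true, true, true); (false, true, true, false); (false, true, false, true); (false, true, false, false); (false, false, true, true); (false, false, true, false); (false, false, false, true); (false, false, false, false)].
Definition okq k0 k1 k2 k3 l01 l02 l03 l12 l13 l23 :=
  has (fun v => let: (x0, x1, x2, x3) := v in [|| x0, x1, x2 | x3] && (4 %| qn k0 k1 k2 k3 l01 l02 l03 l12 l13 l23 x0 x1 x2 x3)) bvecs.
Lemma fin_check : all (fun k0 => all (fun k1 => all (fun k2 => all (fun k3 =>
  all (fun l01 => all (fun l02 => all (fun l03 => all (fun l12 => all (fun l13 => all (fun l23 =>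
   okq k0 k1 k2 k3 l01 l02 l03 l12 l13 l23) (iota 0 2)) (iota 0 2)) (iota 0 2)) (iota 0 2)) (iota 0 2)) (iota 0 2))
   (iota 0 4)) (iota 0 4)) (iota 0 4)) (iota 0 4).
Proof. vm_compute. reflexivity. Qed.
Lemma fin_ok k0 k1 k2 k3 l01 l02 l03 l12 l13 l23 : k0 < 4 -> k1 < 4 -> k2 < 4 -> k3 < 4 ->
  l01 < 2 -> l02 < 2 -> l03 < 2 -> l12 < 2 -> l13 < 2 -> l23 < 2 ->
  exists x0 x1 x2 x3 : bool, [|| x0, x1, x2 | x3] /\ (4 %| qn k0 k1 k2 k3 l01 l02 l03 l12 l13 l23 x0 x1 x2 x3).
Proof.
move=> h0 h1 h2 h3 g1 g2 g3 g4 g5 g6.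
have := fin_check.
move=> /allP /(_ k0); rewrite mem_iota h0 => /(_ isT).
move=> /allP /(_ k1); rewrite mem_iota h1 => /(_ isT).
move=> /allP /(_ k2); rewrite mem_iota h2 => /(_ isT).
move=> /allP /(_ k3); rewrite mem_iota h3 => /(_ isT).
move=> /allP /(_ l01); rewrite mem_iota g1 => /(_ isT).
move=> /allP /(_ l02); rewrite mem_iota g2 => /(_ isT).
move=> /allP /(_ l03); rewrite mem_iota g3 => /(_ isT).
move=> /allP /(_ l12); rewrite mem_iota g4 => /(_ isT).
move=> /allP /(_ l13); rewrite mem_iota g5 => /(_ isT).
move=> /allP /(_ l23); rewrite mem_iota g6 => /(_ isT).
case/hasP => [[[[x0 x1] x2] x3]] _ /andP [hx hq]; by exists x0, x1, x2, x3.
Qed.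

Local Open Scope ring_scope.
Ltac ordc := let H := fresh in case => [[|[|[|[|[|[|[|[|?]]]]]]]] H] //=.

Section Main.
Variable R : idomainType.
Hypothesis HR : is_Z2 R.

Ltac m4solve := rewrite /sym4 ?m4_tr !m4_mul ?m4_1; congr m4; ring.

Lemma embO (a' b c d e' f g h' i j' : R) :
  prim_represents (mxH3_1m1 R) (sym4 (1 + 2 * a') b c d (2 * e') f g (2 * h') i (2 * j')).
Proof.
apply: (@prim8 R (m24 0 1 0 0 0 e' f g) (m24 0 0 1 0 0 0 h' i) (m24 0 0 0 1 0 0 0 j')
               (m24 (1 + a') b c d (-a') (-b) (-c) (-d))
               (m42 0 0 1 0 0 0 0 0) (m42 0 0 0 0 1 0 0 0) (m42 0 0 0 0 0 0 1 0) (m42 1 1 0 0 0 0 0 0)).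
  rewrite !formH formJ !m4_add /sym4; congr m4; ring.
rewrite !m42_mul !m4_add m4_1; congr m4; ring.
Qed.

Lemma embE (a' b c d e' f g h' i k : R) : ev (i - 1) \/ ev k ->
  prim_represents (mxH3_1m1 R) (sym4 (2 * a') b c d (2 * e') f g (2 * h') i (4 * k)).
Proof.
move=> hik; pose cc := k - 1.
have eG : forall y30 y31 y'30 y'31 : R,
  y30 + y31 * h' = 0 -> y31 * i + y'30 * (2 + cc) - y'31 * cc = 1 ->
  prim_represents (mxH3_1m1 R) (sym4 (2 * a') b c d (2 * e') f g (2 * h') i (4 * k)).
  move=> y30 y31 y'30 y'31 h1 h2.
  apply: (@prim8 R (m24 1 0 0 0 a' b c d) (m24 0 1 0 0 0 e' f g) (m24 0 0 1 0 0 0 h' i)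
               (m24 0 0 0 (2 + cc) 0 0 0 (- cc))
               (m42 1 0 0 0 0 0 0 0) (m42 0 0 1 0 0 0 0 0) (m42 0 0 0 0 1 0 y30 y31)
               (m42 0 0 0 0 0 0 y'30 y'31)).
    rewrite !formH formJ !m4_add /sym4 /cc; congr m4; ring.
  rewrite !m42_mul !m4_add m4_1; congr m4; try ring.
  - by apply: (etrans _ h1); ring.
  - by apply: (etrans _ h2); ring.
case: hik => [hi|hk].
  have [ui [hui _]] := odd_inv HR hi.
  apply: (eG (- (ui * h')) ui 0 0); first by ring.
  by apply: (etrans _ hui); ring.
have hcc : ev (cc - 1) by case: hk => y hy; exists (y - 1); rewrite /cc hy; ring.
have [ci [hci _]] := odd_inv HR hcc.
apply: (eG 0 0 0 (- ci)); first by ring.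
by apply: (etrans _ hci); ring.
Qed.


Lemma swap01 (a b c d e f g h i j : R) :
  isometric (sym4 a b c d e f g h i j) (sym4 e b f g a c d h i j).
Proof. apply: (@iso_by R _ _ _ (m4 (0) (1) (0) (0) (1) (0) (0) (0) (0) (0) (1) (0) (0) (0) (0) (1)) (m4 (0) (1) (0) (0) (1) (0) (0) (0) (0) (0) (1) (0) (0) (0) (0) (1))); m4solve. Qed.

Lemma swap02 (a b c d e f g h i j : R) :
  isometric (sym4 a b c d e f g h i j) (sym4 h f c i e b g a d j).
Proof. apply: (@iso_by R _ _ _ (m4 (0) (0) (1) (0) (0) (1) (0) (0) (1) (0) (0) (0) (0) (0) (0) (1)) (m4 (0) (0) (1) (0) (0) (1) (0) (0) (1) (0) (0) (0) (0) (0) (0) (1))); m4solve. Qed.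

Lemma swap03 (a b c d e f g h i j : R) :
  isometric (sym4 a b c d e f g h i j) (sym4 j g i d e f b h c a).
Proof. apply: (@iso_by R _ _ _ (m4 (0) (0) (0) (1) (0) (1) (0) (0) (0) (0) (1) (0) (1) (0) (0) (0)) (m4 (0) (0) (0) (1) (0) (1) (0) (0) (0) (0) (1) (0) (1) (0) (0) (0))); m4solve. Qed.

Lemma swap12 (a b c d e f g h i j : R) :
  isometric (sym4 a b c d e f g h i j) (sym4 a c b d h f i e g j).
Proof. apply: (@iso_by R _ _ _ (m4 (1) (0) (0) (0) (0) (0) (1) (0) (0) (1) (0) (0) (0) (0) (0) (1)) (m4 (1) (0) (0) (0) (0) (0) (1) (0) (0) (1) (0) (0) (0) (0) (0) (1))); m4solve. Qed.

Lemma swap13 (a b c d e f g h i j : R) :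
  isometric (sym4 a b c d e f g h i j) (sym4 a d c b j i g h f e).
Proof. apply: (@iso_by R _ _ _ (m4 (1) (0) (0) (0) (0) (0) (0) (1) (0) (0) (1) (0) (0) (1) (0) (0)) (m4 (1) (0) (0) (0) (0) (0) (0) (1) (0) (0) (1) (0) (0) (1) (0) (0))); m4solve. Qed.

Lemma swap23 (a b c d e f g h i j : R) :
  isometric (sym4 a b c d e f g h i j) (sym4 a b d c e g f j i h).
Proof. apply: (@iso_by R _ _ _ (m4 (1) (0) (0) (0) (0) (1) (0) (0) (0) (0) (0) (1) (0) (0) (1) (0)) (m4 (1) (0) (0) (0) (0) (1) (0) (0) (0) (0) (0) (1) (0) (0) (1) (0))); m4solve. Qed.

Lemma swap0213 (a b c d e f g h i j : R) :
  isometric (sym4 a b c d e f g h i j) (sym4 h i c f j d g a b e).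
Proof. apply: (@iso_by R _ _ _ (m4 (0) (0) (1) (0) (0) (0) (0) (1) (1) (0) (0) (0) (0) (1) (0) (0)) (m4 (0) (0) (1) (0) (0) (0) (0) (1) (1) (0) (0) (0) (0) (1) (0) (0))); m4solve. Qed.

Lemma reduce1 (a b c d e f g h i j : R) :
  isometric (sym4 a b c d e f g h i j)
   (sym4 a (b - e * a) (c - h * a) (d - j * a)
         (e - 2 * e * b + e ^+ 2 * a) (f - e * c - h * b + e * h * a) (g - e * d - j * b + e * j * a)
         (h - 2 * h * c + h ^+ 2 * a) (i - h * d - j * c + h * j * a) (j - 2 * j * d + j ^+ 2 * a)).
Proof.
apply: (@iso_by R _ _ _ (m4 1 (-e) (-h) (-j) 0 1 0 0 0 0 1 0 0 0 0 1) (m4 1 e h j 0 1 0 0 0 0 1 0 0 0 0 1)); m4solve.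
Qed.

Lemma proj (a b e h i j al be ga de : R) :
  isometric (sym4 a b (a * al + b * be) (a * ga + b * de) e (b * al + e * be) (b * ga + e * de) h i j)
   (sym4 a b 0 0 e 0 0 (h - a * al ^+ 2 - 2 * b * al * be - e * be ^+ 2)
      (i - a * al * ga - b * be * ga - b * al * de - e * be * de) (j - a * ga ^+ 2 - 2 * b * ga * de - e * de ^+ 2)).
Proof.
apply: (@iso_by R _ _ _ (m4 1 0 (-al) (-ga) 0 1 (-be) (-de) 0 0 1 0 0 0 0 1) (m4 1 0 al ga 0 1 be de 0 0 1 0 0 0 0 1)); m4solve.
Qed.

Lemma coladd (a b c d e f g h i j x0 x1 x2 : R) :
  isometric (sym4 a b c d e f g h i j)
  (sym4 a b c (a*x0+b*x1+c*x2+d) e f (b*x0+e*x1+f*x2+g) h (c*x0+f*x1+h*x2+i)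
        (x0*(a*x0+b*x1+c*x2+d) + x1*(b*x0+e*x1+f*x2+g) + x2*(c*x0+f*x1+h*x2+i) + (d*x0+g*x1+i*x2+j))).
Proof.
apply: (@iso_by R _ _ _ (m4 1 0 0 x0 0 1 0 x1 0 0 1 x2 0 0 0 1) (m4 1 0 0 (-x0) 0 1 0 (-x1) 0 0 1 (-x2) 0 0 0 1)); m4solve.
Qed.

Lemma split_l m n (i : 'I_m) : split (lshift n i) = inl i.
Proof. exact: (unsplitK (inl i)). Qed.
Lemma split_r m n (i : 'I_n) : split (rshift m i) = inr i.
Proof. exact: (unsplitK (inr i)). Qed.

Lemma blk_eq (a b c a' b' c' : R) :
  sym4 a b 0 0 c 0 0 a' b' c' = block_mx (mx2 a b b c) 0 0 (mx2 a' b' b' c').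
Proof.
apply/matrixP => i j; rewrite -(@splitK 2 2 i) -(@splitK 2 2 j).
case: (@split 2 2 i) => i'; case: (@split 2 2 j) => j';
  do 4 (rewrite ?mxE ?split_l ?split_r /=); move: i' j'; ordc; ordc; by rewrite ?mxE.
Qed.

Lemma mx2Z (k x y z w : R) : mx2 (k * x) (k * y) (k * z) (k * w) = k *: mx2 x y z w.
Proof. apply/matrixP; ordc; ordc; by rewrite !mxE /=. Qed.

Lemma blkmul p q (V : 'M[R]_p) (W : 'M[R]_q) P Q :
  (block_mx V 0 0 W)^T *m block_mx P 0 0 Q *m block_mx V 0 0 W = block_mx (V^T *m P *m V) 0 0 (W^T *m Q *m W).
Proof.
rewrite tr_block_mx !mulmx_block !trmx0.
by rewrite !(mulmx0, mul0mx, addr0, add0r).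
Qed.

Lemma failure (a b c a' b' c' : R) : ev (a - 1) -> ev (b - 1) -> ev (c - 1) ->
  ev (a' - 1) -> ev (b' - 1) -> ev (c' - 1) ->
  isometric (sym4 (2 * a) b 0 0 (2 * c) 0 0 (2 * (2 * a')) (2 * b') (2 * (2 * c'))) (mxA_2A R).
Proof.
move=> ha hb hc ha' hb' hc'.
have [V [hV eV]] := Bin HR ha hb hc.
have [W [hW eW]] := Bin HR ha' hb' hc'.
exists (block_mx V 0 0 W); split.
  rewrite unitmxE (_ : \det (block_mx V 0 0 W : 'M[R]_4) = \det V * \det W); last exact: (@det_ublock _ 2 2 V 0 W).
  by rewrite unitrM -!unitmxE hV hW.
rewrite blk_eq mx2Z; refine (etrans (@blkmul 2 2 V W _ _) _).
by rewrite -scalemxAr -scalemxAl eV eW.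
Qed.

Lemma par (x : R) : (exists y, x = 2 * y) \/ (exists y, x = 1 + 2 * y).
Proof.
case: (ev_or_odd HR x) => [[y ->]|[y hy]]; [left|right]; exists y => //.
by rewrite -hy; ring.
Qed.

Lemma mod4 (x : R) : exists k : nat, (k < 4)%N /\ exists r, x = k%:R + 4 * r.
Proof.
case: (par x) => [[y ->]|[y ->]]; case: (par y) => [[z ->]|[z ->]].
- by exists 0%N; split => //; exists z; ring.
- by exists 2%N; split => //; exists z; ring.
- by exists 1%N; split => //; exists z; ring.
- by exists 3%N; split => //; exists z; ring.
Qed.

Lemma mod2 (x : R) : exists k : nat, (k < 2)%N /\ exists r, x = k%:R + 2 * r.
Proof.
case: (par x) => [[y ->]|[y ->]].
- by exists 0%N; split => //; exists y; ring.
- by exists 1%N; split => //; exists y; ring.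
Qed.

Definition QN (n00 n01 n02 n03 n11 n12 n13 n22 n23 n33 : R) (x0 x1 x2 x3 : bool) : R :=
  (x0 : nat)%:R ^+ 2 * n00 + (x1 : nat)%:R ^+ 2 * n11 + (x2 : nat)%:R ^+ 2 * n22 + (x3 : nat)%:R ^+ 2 * n33 +
  2 * ((x0 : nat)%:R * (x1 : nat)%:R * n01 + (x0 : nat)%:R * (x2 : nat)%:R * n02 + (x0 : nat)%:R * (x3 : nat)%:R * n03
     + (x1 : nat)%:R * (x2 : nat)%:R * n12 + (x1 : nat)%:R * (x3 : nat)%:R * n13 + (x2 : nat)%:R * (x3 : nat)%:R * n23).

Lemma finite4 (n00 n01 n02 n03 n11 n12 n13 n22 n23 n33 : R) :
  exists x0 x1 x2 x3 : bool, [|| x0, x1, x2 | x3] /\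
    exists m, QN n00 n01 n02 n03 n11 n12 n13 n22 n23 n33 x0 x1 x2 x3 = 4 * m.
Proof.
have [k0 [h0 [r0 ->]]] := mod4 n00.
have [k1 [h1 [r1 ->]]] := mod4 n11.
have [k2 [h2 [r2 ->]]] := mod4 n22.
have [k3 [h3 [r3 ->]]] := mod4 n33.
have [l01 [g1 [s01 ->]]] := mod2 n01.
have [l02 [g2 [s02 ->]]] := mod2 n02.
have [l03 [g3 [s03 ->]]] := mod2 n03.
have [l12 [g4 [s12 ->]]] := mod2 n12.
have [l13 [g5 [s13 ->]]] := mod2 n13.
have [l23 [g6 [s23 ->]]] := mod2 n23.
have [x0 [x1 [x2 [x3 [hx hq]]]]] := fin_ok h0 h1 h2 h3 g1 g2 g3 g4 g5 g6.
exists x0, x1, x2, x3; split => //.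
set q := qn _ _ _ _ _ _ _ _ _ _ _ _ _ _ in hq.
have Hq : q%:R = 4 * (q %/ 4)%:R :> R by rewrite -natrM mulnC divnK.
exists ((q %/ 4)%:R + ((x0 : nat)%:R * r0 + (x1 : nat)%:R * r1 + (x2 : nat)%:R * r2 + (x3 : nat)%:R * r3
   + (x0 : nat)%:R * (x1 : nat)%:R * s01 + (x0 : nat)%:R * (x2 : nat)%:R * s02 + (x0 : nat)%:R * (x3 : nat)%:R * s03
   + (x1 : nat)%:R * (x2 : nat)%:R * s12 + (x1 : nat)%:R * (x3 : nat)%:R * s13 + (x2 : nat)%:R * (x3 : nat)%:R * s23)).
rewrite mulrDr -Hq /q /qn /QN !natrD !natrM.
by case: x0 {hx hq q Hq}; case: x1; case: x2; case: x3; rewrite /=; ring.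
Qed.

Lemma embO' (a b c d e f g h i j : R) : ev (a - 1) -> ev e -> ev h -> ev j ->
  prim_represents (mxH3_1m1 R) (sym4 a b c d e f g h i j).
Proof.
move=> [a' ea] [e' ->] [h' ->] [j' ->].
have -> : a = 1 + 2 * a' by rewrite -ea; ring.
exact: embO.
Qed.

Lemma embE' (a b c d e f g h i j : R) : ev a -> ev e -> ev h ->
  (exists k, j = 4 * k /\ (ev (i - 1) \/ ev k)) ->
  prim_represents (mxH3_1m1 R) (sym4 a b c d e f g h i j).
Proof.
move=> [a' ->] [e' ->] [h' ->] [k [-> hk]].
exact: embE.
Qed.

Lemma iso_notiso n (G G' A : 'M[R]_n) : isometric G G' -> ~ isometric G A -> ~ isometric G' A.
Proof. by move=> h1 h2 h3; apply: h2; exact: iso_trans h1 h3. Qed.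

Lemma evdiag (a x y : R) : ev (a - 1) -> ev (x - 2 * x * y + x ^+ 2 * a).
Proof.
move=> [a' ha]; have [z hz] := sq_x_x HR x.
exists (z + x ^+ 2 * a' - x * y).
have -> : x - 2 * x * y + x ^+ 2 * a = (x + x ^+ 2) + x ^+ 2 * (a - 1) - 2 * x * y by ring.
rewrite hz ha; ring.
Qed.

Lemma caseOdd (a b c d e f g h i j : R) : ev (a - 1) ->
  prim_represents (mxH3_1m1 R) (sym4 a b c d e f g h i j).
Proof.
move=> ha; apply: (prim_transport (reduce1 _ _ _ _ _ _ _ _ _ _)).
by apply: embO' => //; apply: evdiag.
Qed.

Lemma oddE (x : R) : ev ((1 + 2 * x) - 1).
Proof. by exists x; ring. Qed.

Lemma caseBlk (p b q r s t : R) : ev p -> ev (b - 1) -> ev q -> ev r -> ev t ->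
  ~ isometric (sym4 p b 0 0 q 0 0 r s t) (mxA_2A R) ->
  prim_represents (mxH3_1m1 R) (sym4 p b 0 0 q 0 0 r s t).
Proof.
move=> [p' ->] hb [q' ->] [r' ->] [t' ->].
case: (par p') => [[p2 ->]|[p2 ->]].
  move=> _; apply: (prim_transport (iso_trans (swap0213 _ _ _ _ _ _ _ _ _ _) (swap23 _ _ _ _ _ _ _ _ _ _))).
  apply: embE'; try exact: ev2.
  by exists p2; split; [ring | left].
case: (par q') => [[q2 ->]|[q2 ->]].
  move=> _; apply: (prim_transport (swap0213 _ _ _ _ _ _ _ _ _ _)).
  apply: embE'; try exact: ev2.
  by exists q2; split; [ring | left].
case: (par r') => [[r2 ->]|[r2 ->]]; last first.
  move=> _; apply: (prim_transport (iso_trans (iso_trans (swap0213 _ _ _ _ _ _ _ _ _ _) (swap23 _ _ _ _ _ _ _ _ _ _))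
     (coladd _ _ _ _ _ _ _ _ _ _ 1 0 0))).
  apply: embE'; try exact: ev2.
  exists (1 + r2 + p2); split; first ring.
  by left; apply: (ev_eq _ hb); ring.
case: (par t') => [[t2 ->]|[t2 ->]]; last first.
  move=> _; apply: (prim_transport (iso_trans (iso_trans (swap0213 _ _ _ _ _ _ _ _ _ _) (swap23 _ _ _ _ _ _ _ _ _ _))
     (coladd _ _ _ _ _ _ _ _ _ _ 0 1 0))).
  apply: embE'; try exact: ev2.
  exists (1 + t2 + p2); split; first ring.
  by left; apply: (ev_eq _ hb); ring.
case: (par s) => [[s1 ->]|[s1 ->]]; last first.
  move=> _; apply: (prim_transport (swap23 _ _ _ _ _ _ _ _ _ _)).
  apply: embE'; try exact: ev2.
  by exists r2; split; [ring | left; exact: oddE].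
case: (par r2) => [[r3 ->]|[r3 ->]].
  move=> _; apply: (prim_transport (swap23 _ _ _ _ _ _ _ _ _ _)).
  apply: embE'; try exact: ev2.
  by exists (2 * r3); split; [ring | right; exact: ev2].
case: (par t2) => [[t3 ->]|[t3 ->]].
  move=> _; apply: embE'; try exact: ev2.
  by exists (2 * t3); split; [ring | right; exact: ev2].
case: (par s1) => [[s2 ->]|[s2 ->]]; last first.
  by move=> hn; exfalso; apply: hn; apply: failure; rewrite ?oddE //; exact: oddE.
move=> _; apply: (prim_transport (coladd _ _ _ _ _ _ _ _ _ _ 0 0 1)).
apply: embE'; try exact: ev2.
by exists (2 * (1 + r3 + s2 + t3)); split; [ring | right; exact: ev2].
Qed.

Lemma caseA (a b c d e f g h i j : R) : ev a -> ev (b - 1) -> ev e -> ev h -> ev j ->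
  ~ isometric (sym4 a b c d e f g h i j) (mxA_2A R) ->
  prim_represents (mxH3_1m1 R) (sym4 a b c d e f g h i j).
Proof.
move=> [a1 ->] hb [e1 ->] [h1 ->] [j1 ->].
have od : ev ((2 * a1 * (2 * e1) - b ^+ 2) - 1).
  apply: (ev_eq _ (evB (evB (@ev2 R (a1 * (2 * e1))) (oddMul hb hb)) (@ev2 R 1))); ring.
have [di [hdi _]] := odd_inv HR od.
have key : forall u v, exists al be, u = 2 * a1 * al + b * be /\ v = b * al + 2 * e1 * be.
  move=> u v; exists ((2 * e1 * u - b * v) * di), ((2 * a1 * v - b * u) * di); split.
    transitivity (u * ((2 * a1 * (2 * e1) - b ^+ 2) * di)); first by rewrite hdi mulr1.
    ring.
  transitivity (v * ((2 * a1 * (2 * e1) - b ^+ 2) * di)); first by rewrite hdi mulr1.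
  ring.
have [al [be [-> ->]]] := key c f.
have [ga [de [-> ->]]] := key d g.
move=> hn; apply: (prim_transport (proj _ _ _ _ _ _ _ _ _ _)).
apply: caseBlk => //; try exact: ev2.
- by exists (h1 - a1 * al ^+ 2 - b * al * be - e1 * be ^+ 2); ring.
- by exists (j1 - a1 * ga ^+ 2 - b * ga * de - e1 * de ^+ 2); ring.
- exact: (iso_notiso (proj _ _ _ _ _ _ _ _ _ _) hn).
Qed.

Lemma caseB (a1 b1 c1 d1 e1 f1 g1 h1 i1 j1 : R) :
  prim_represents (mxH3_1m1 R) (sym4 (2 * a1) (2 * b1) (2 * c1) (2 * d1) (2 * e1) (2 * f1) (2 * g1)
     (2 * h1) (2 * i1) (2 * j1)).
Proof.
have [x0 [x1 [x2 [x3 [hx [m hm]]]]]] := finite4 a1 b1 c1 d1 e1 f1 g1 h1 i1 j1.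
have fin : forall QQ : R, QQ = 2 * QN a1 b1 c1 d1 e1 f1 g1 h1 i1 j1 x0 x1 x2 x3 ->
    forall ii : R, exists k, QQ = 4 * k /\ (ev (ii - 1) \/ ev k).
  move=> QQ hQ ii; exists (2 * m); split; [by rewrite hQ hm; ring | right; exact: ev2].
move: hx fin; clear hm; rewrite /QN.
case: x3 => /= hx fin.
  apply: (prim_transport (coladd _ _ _ _ _ _ _ _ _ _ (x0 : nat)%:R (x1 : nat)%:R (x2 : nat)%:R)).
  apply: embE'; try exact: ev2.
  by apply: fin; ring.
case: x2 hx fin => /= hx fin.
  apply: (prim_transport (iso_trans (swap23 _ _ _ _ _ _ _ _ _ _) (coladd _ _ _ _ _ _ _ _ _ _ (x0 : nat)%:R (x1 : nat)%:R 0))).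
  apply: embE'; try exact: ev2.
  by apply: fin; ring.
case: x1 hx fin => /= hx fin.
  apply: (prim_transport (iso_trans (swap13 _ _ _ _ _ _ _ _ _ _) (coladd _ _ _ _ _ _ _ _ _ _ (x0 : nat)%:R 0 0))).
  apply: embE'; try exact: ev2.
  by apply: fin; ring.
case: x0 hx fin => //= hx fin.
apply: (prim_transport (iso_trans (swap03 _ _ _ _ _ _ _ _ _ _) (coladd _ _ _ _ _ _ _ _ _ _ 0 0 0))).
apply: embE'; try exact: ev2.
by apply: fin; ring.
Qed.

Lemma caseEven (a b c d e f g h i j : R) : ev a -> ev e -> ev h -> ev j ->
  ~ isometric (sym4 a b c d e f g h i j) (mxA_2A R) ->
  prim_represents (mxH3_1m1 R) (sym4 a b c d e f g h i j).
Proof.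
move=> [a1 ->] [e1 ->] [h1 ->] [j1 ->].
case: (par b) => [[b1 ->]|[b1 ->]]; last first.
  by move=> hn; apply: caseA => //; try exact: ev2; exact: oddE.
case: (par c) => [[c1 ->]|[c1 ->]]; last first.
  move=> hn; apply: (prim_transport (swap12 _ _ _ _ _ _ _ _ _ _)).
  apply: caseA; try exact: ev2; first exact: oddE.
  exact: (iso_notiso (swap12 _ _ _ _ _ _ _ _ _ _) hn).
case: (par d) => [[d1 ->]|[d1 ->]]; last first.
  move=> hn; apply: (prim_transport (swap13 _ _ _ _ _ _ _ _ _ _)).
  apply: caseA; try exact: ev2; first exact: oddE.
  exact: (iso_notiso (swap13 _ _ _ _ _ _ _ _ _ _) hn).
case: (par f) => [[f1 ->]|[f1 ->]]; last first.
  move=> hn; apply: (prim_transport (swap02 _ _ _ _ _ _ _ _ _ _)).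
  apply: caseA; try exact: ev2; first exact: oddE.
  exact: (iso_notiso (swap02 _ _ _ _ _ _ _ _ _ _) hn).
case: (par g) => [[g1 ->]|[g1 ->]]; last first.
  move=> hn; apply: (prim_transport (swap03 _ _ _ _ _ _ _ _ _ _)).
  apply: caseA; try exact: ev2; first exact: oddE.
  exact: (iso_notiso (swap03 _ _ _ _ _ _ _ _ _ _) hn).
case: (par i) => [[i1 ->]|[i1 ->]]; last first.
  move=> hn; apply: (prim_transport (swap0213 _ _ _ _ _ _ _ _ _ _)).
  apply: caseA; try exact: ev2; first exact: oddE.
  exact: (iso_notiso (swap0213 _ _ _ _ _ _ _ _ _ _) hn).
move=> _; exact: caseB.
Qed.

Lemma mainsym (a b c d e f g h i j : R) :
  ~ isometric (sym4 a b c d e f g h i j) (mxA_2A R) ->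
  prim_represents (mxH3_1m1 R) (sym4 a b c d e f g h i j).
Proof.
case: (par a) => [[a1 ->]|[a1 ->]]; last by move=> _; apply: caseOdd; exact: oddE.
case: (par e) => [[e1 ->]|[e1 ->]]; last first.
  by move=> _; apply: (prim_transport (swap01 _ _ _ _ _ _ _ _ _ _)); apply: caseOdd; exact: oddE.
case: (par h) => [[h1 ->]|[h1 ->]]; last first.
  by move=> _; apply: (prim_transport (swap02 _ _ _ _ _ _ _ _ _ _)); apply: caseOdd; exact: oddE.
case: (par j) => [[j1 ->]|[j1 ->]]; last first.
  by move=> _; apply: (prim_transport (swap03 _ _ _ _ _ _ _ _ _ _)); apply: caseOdd; exact: oddE.
by apply: caseEven; exact: ev2.
Qed.

End Main.

Lemma symG (R : idomainType) (G : 'M[R]_4) : G^T = G ->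
  G = sym4 (G (inord 0) (inord 0)) (G (inord 0) (inord 1)) (G (inord 0) (inord 2)) (G (inord 0) (inord 3))
           (G (inord 1) (inord 1)) (G (inord 1) (inord 2)) (G (inord 1) (inord 3))
           (G (inord 2) (inord 2)) (G (inord 2) (inord 3)) (G (inord 3) (inord 3)).
Proof.
move=> HG; apply/matrixP; ordc; ordc; rewrite /sym4 /m4 /mxl mxE /=;
  first [ by congr (G _ _); apply/val_inj; rewrite /= inordK
        | by rewrite -[in LHS]HG mxE; congr (G _ _); apply/val_inj; rewrite /= inordK ].
Qed.

Unset Implicit Arguments.

Theorem lemma6p7 (R : idomainType) (HR : is_Z2 R) (G : 'M[R]_4) :
  G^T = G -> \det G != 0 ->
  ~ isometric G (mxA_2A R) ->
  prim_represents (mxH3_1m1 R) G.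
Proof.
move=> HG _; rewrite (symG HG); exact: mainsym.
Qed.
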